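(* If the algorithm Classifier outputs ''Yes'' on input configuration $G$, then $G$ is a feasible configuration.
   Context: Model. A configuration is a finite simple undirected connected graph $G$ with $n$ nodes, each node $v$ tagged with a non-negative integer $t_v$ (wakeup tag); smallest tag $0$, span $\sigma$ = largest tag. Nodes are anonymous and communicate in synchronous global rounds. A node $v$ wakes up in the first global round $r\le t_v$ in which it receives a message, if any, and otherwise in global round $t_v$; its local clock is $0$ in its wakeup round, it acts from local round $1$, and nodes do not know the global clock. In each round a node transmits a message to all neighbours, listens, or terminates. A listening node receives $M$ if exactly one neighbour transmits ($M$), hears collision noise (distinct from silence and messages) if at least two neighbours transmit, and silence otherwise; a transmitting node hears nothing. A DRIP is a common function mapping a node's history (what it heard in each local round $0,\ldots,i-1$, including whether/by which message it was woken) to its action in local round $i\ge1$, with every node eventually terminating permanently; a decision function maps each node's final history to $\{0,1\}$; a dedicated leader election algorithm for $G$ is a DRIP plus decision function such that exactly one node of $G$ outputs $1$; $G$ is feasible if one exists. Algorithm Classifier (centralized, input $G$): maintains a partition of the nodes into classes $\mathrm{class}(v)\in\{1,\ldots,\mathit{numClasses}\}$, initially all in class $1$. One iteration: for each node $v$, its label $L_v$ is the set of triples obtained as follows: for each neighbour $w$ with $\mathrm{class}(w)\ne\mathrm{class}(v)$ or $t_w\ne t_v$ form the pair $(\mathrm{class}(w),\sigma+1+t_w-t_v)$; for each distinct pair $(a,b)$ so formed, $L_v$ contains $(a,b,1)$ if exactly one neighbour yields it and $(a,b,* )$ otherwise. Then the partition is refined: two nodes share a new class iff they shared a class before and have equal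 labels. Main loop: for $i=1,\ldots,\lceil n/2\rceil$: record $\mathit{old}=\mathit{numClasses}$; do one iteration; if some class has exactly one node, output ''Yes'' and stop; else if the number of classes equals $\mathit{old}$, output ''No'' and stop. *)

(* Defs.v *)
From mathcomp Require Import all_boot.
Set Implicit Arguments. Unset Strict Implicit. Unset Printing Implicit Defensive.

Definition is_config (T : finType) (e : rel T) (t : T -> nat) : Prop :=
  [/\ symmetric e, irreflexive e, (forall x y : T, connect e x y)
    & exists v : T, t v = 0].

Definition span (T : finType) (t : T -> nat) : nat := \max_(v : T) t v.

(* What a node hears in one round. OSelf: the node transmitted (hears nothing). *)
Inductive obs := OSil | ONoise | OMsg of nat | OSelf.
Inductive action := Transmit of nat | Listen | Terminate.
(* State of a node at the end of a global round; the history records what the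
   node heard in each of its local rounds 0 .. i-1 (round 0 = wakeup round). *)
Inductive nstate := Asleep | Awake of seq obs | Done of seq obs.

Section Exec.
Variables (T : finType) (e : rel T) (t : T -> nat) (A : seq obs -> action).

(* message transmitted by a node whose state at the end of the previous round is s *)
Definition tmsg (s : nstate) : option nat :=
  match s with
  | Awake h => if A h is Transmit m then Some m else None
  | _ => None
  end.

Definition transmitters (st : T -> nstate) (v : T) : {set T} :=
  [set w | e v w && (tmsg (st w) != None)].

Definition heard (st : T -> nstate) (v : T) : obs :=
  let X := transmitters st v in
  if #|X| == 0 then OSil
  else if #|X| == 1 then
    (if [pick w in X] is Some w then
       (if tmsg (st w) is Some m then OMsg m else OSil)
     else OSil)
  else ONoise.

Definition step (r : nat) (st : T -> nstate) : T -> nstate := fun v =>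
  match st v with
  | Asleep =>
      if heard st v is OMsg _ then Awake [:: heard st v]
      else if r == t v then Awake [:: heard st v] else Asleep
  | Awake h =>
      match A h with
      | Transmit _ => Awake (rcons h OSelf)
      | Listen => Awake (rcons h (heard st v))
      | Terminate => Done h
      end
  | Done h => Done h
  end.

(* states at the end of global round r *)
Fixpoint exec (r : nat) : T -> nstate :=
  match r with
  | 0 => step 0 (fun _ => Asleep)
  | r'.+1 => step r'.+1 (exec r')
  end.
End Exec.

Definition is_done (s : nstate) : bool := if s is Done _ then true else false.
Definition final_hist (s : nstate) : seq obs :=
  match s with Done h => h | Awake h => h | Asleep => [::] end.

(* A dedicated leader election algorithm for G exists: a DRIP A (under which
   every node eventually terminates) and a decision function d such that
   exactly one node outputs 1. *)
Definition feasible (T : finType) (e : rel T) (t : T -> nat) : Prop :=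
  exists (A : seq obs -> action) (d : seq obs -> bool) (r : nat),
    (forall v : T, is_done (exec e t A r v)) /\
    #|[set v : T | d (final_hist (exec e t A r v))]| = 1.

(* Algorithm Classifier. A partition is represented by its equivalence *)
(* relation P; the class of v is the set [set w | P v w].              *)
Section Classifier.
Variables (T : finType) (e : rel T) (t : T -> nat).

Definition cls (P : rel T) (v : T) : {set T} := [set w | P v w].

Definition formed (P : rel T) (v : T) : seq ({set T} * nat) :=
  [seq (cls P w, (span t).+1 + t w - t v)
  | w <- enum T & e v w && (~~ P v w || (t w != t v))].

(* label: triples (a, b, true) for "1" (exactly one neighbour), (a, b, false) for "*" *)
Definition label (P : rel T) (v : T) : seq ({set T} * nat * bool) :=
  [seq (p, count_mem p (formed P v) == 1) | p <- undup (formed P v)].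

Definition same_label (P : rel T) (u v : T) : bool :=
  all (fun x => x \in label P v) (label P u) &&
  all (fun x => x \in label P u) (label P v).

Definition refine (P : rel T) : rel T := fun u v => P u v && same_label P u v.

Definition part (i : nat) : rel T := iter i refine (fun _ _ => true).

Definition numClasses (P : rel T) : nat := #|[set cls P v | v : T]|.
Definition has_singleton (P : rel T) : bool := [exists v, #|cls P v| == 1].

(* Classifier outputs "Yes": at some iteration i in 1..ceil(n/2) a singleton class
   appears, and no earlier iteration stopped (no singleton, number of classes grew). *)
Definition classifier_yes : Prop :=
  exists i : nat,
    [/\ 1 <= i <= uphalf #|T|, has_singleton (part i)
      & forall j, 1 <= j < i ->
          ~~ has_singleton (part j) /\ numClasses (part j) <> numClasses (part j.-1)].
End Classifier.

(* Main.v *)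
Require Import Defs.
From HB Require Import structures.
From mathcomp Require Import all_boot zify.
From Stdlib Require Import FunctionalExtensionality.
Set Implicit Arguments. Unset Strict Implicit. Unset Printing Implicit Defensive.

Definition obs_eqb (o1 o2 : obs) : bool := match o1, o2 with
 | OSil, OSil => true | ONoise, ONoise => true | OMsg m, OMsg n => m == n
 | OSelf, OSelf => true | _, _ => false end.
Lemma obs_eqP : Equality.axiom obs_eqb.
Proof.
case=> [||m|] [||n|] /=; try by constructor.
by apply: (iffP eqP) => [->|[]].
Qed.
HB.instance Definition _ := hasDecEq.Build obs obs_eqP.

Lemma count_enumT (T : finType) (a : pred T) : count a (enum T) = #|a|.
Proof. by rewrite cardE /enum_mem size_filter count_filter; apply: eq_count => x; rewrite /= andbT. Qed.

Section Sim.
Variables (T : finType) (e : rel T) (t : T -> nat) (K : nat).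
Local Notation s := (span t).
Local Notation W := (s.*2.+2).
Local Notation N := #|{set T}|.

Definition cidx (C : {set T}) : nat := enum_rank C.
Definition self_tx (v : T) (x : nat) : bool :=
  [&& x %/ W < K * N, x %% W == s.+1
    & (x %/ W) %% N == cidx (cls (part e t ((x %/ W) %/ N)) v)].
Definition tx (w : T) (g : nat) : bool := (t w < g) && self_tx w (g - t w).
Definition obs_of (S : {set T}) : obs :=
  if #|S| == 0 then OSil else if #|S| == 1 then OMsg 0 else ONoise.
Definition Xs v g := [set w | e v w && tx w g].
Definition E (v : T) (x : nat) : obs :=
  if self_tx v x then OSelf else obs_of (Xs v (t v + x)).
Definition Hpre v n := mkseq (E v) n.
Definition Tend := K * N * W.
Definition Alg (h : seq obs) : action :=
  if Tend <= size h then Terminate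
  else if [exists u, (h == Hpre u (size h)) && self_tx u (size h)]
       then Transmit 0 else Listen.

Lemma tle v : t v <= s.
Proof. exact: (leq_bigmax (F := t) v). Qed.

Lemma N_gt0 : 0 < N.
Proof. by apply/card_gt0P; exists set0. Qed.

Lemma cidx_eq C D : (cidx C == cidx D) = (C == D).
Proof. by apply/eqP/eqP => [H|->] //; apply: enum_rank_inj; apply: val_inj. Qed.

Lemma cidx_lt C : cidx C < N.
Proof. by rewrite /cidx; case: (enum_rank C). Qed.

Lemma partS k : part e t k.+1 = refine e t (part e t k).
Proof. by []. Qed.

Lemma same_label_refl P u : same_label e t P u u.
Proof. by rewrite /same_label andbb; apply/allP. Qed.
Lemma same_label_sym P u v : same_label e t P u v = same_label e t P v u.
Proof. by rewrite /same_label andbC. Qed.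
Lemma same_label_trans P u v w :
  same_label e t P u v -> same_label e t P v w -> same_label e t P u w.
Proof.
move=> /andP[/allP a1 /allP a2] /andP[/allP b1 /allP b2].
by apply/andP; split; apply/allP => x Hx; [apply: b1; apply: a1 | apply: a2; apply: b2].
Qed.

Lemma part_refl k u : part e t k u u.
Proof. elim: k => [|k IH] //; by rewrite partS /refine IH same_label_refl. Qed.
Lemma part_sym k u v : part e t k u v = part e t k v u.
Proof. elim: k => [|k IH] //; by rewrite partS /refine IH same_label_sym. Qed.
Lemma part_trans k u v w : part e t k u v -> part e t k v w -> part e t k u w.
Proof.
elim: k u v w => [|k IH] // u v w; rewrite !partS /refine.
move=> /andP[H1 H2] /andP[H3 H4]; rewrite (IH _ _ _ H1 H3).
exact: same_label_trans H2 H4.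
Qed.
Lemma cls_eq k u v : part e t k u v -> cls (part e t k) u = cls (part e t k) v.
Proof.
move=> H; apply/setP => w; rewrite !inE; apply/idP/idP => Hw.
  by rewrite part_sym in H; apply: part_trans H Hw.
by apply: part_trans H Hw.
Qed.
Lemma cls_eqP k u v : (cls (part e t k) u == cls (part e t k) v) = part e t k u v.
Proof.
apply/eqP/idP => [H|]; last exact: cls_eq.
have : v \in cls (part e t k) v by rewrite inE part_refl.
by rewrite -H inE.
Qed.


Lemma W_gt0 : 0 < W. Proof. by []. Qed.

Lemma divW q b : b < W -> (q * W + b) %/ W = q.
Proof. by move=> Hb; rewrite divnMDl // divn_small // addn0. Qed.
Lemma modW q b : b < W -> (q * W + b) %% W = b.
Proof. by move=> Hb; rewrite modnMDl modn_small. Qed.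

Lemma AL tu tw q b : tu <= s -> tw <= s -> b < W ->
  (tw < tu + (q * W + b)) && ((tu + (q * W + b) - tw) %% W == s.+1)
  = (s.+1 + tw - tu == b).
Proof.
move=> Hu Hw Hb; apply/idP/idP.
  case/andP => Hlt /eqP Hm.
  set x := tu + (q * W + b) - tw.
  have Hx := divn_eq x W; rewrite Hm in Hx.
  set q' := x %/ W in Hx.
  have E1 : q' * W + s.+1 + tw = q * W + b + tu by rewrite /x in Hx; lia.
  case: (ltngtP q' q) => Hq.
  - have : q'.+1 * W <= q * W by rewrite leq_mul2r Hq orbT.
    rewrite mulSn; lia.
  - have : q.+1 * W <= q' * W by rewrite leq_mul2r Hq orbT.
    rewrite mulSn; lia.
  - rewrite Hq in E1; apply/eqP; lia.
move/eqP => Hb'.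
have -> : tu + (q * W + b) - tw = q * W + s.+1 by lia.
rewrite modW; last by lia.
rewrite eqxx andbT; lia.
Qed.

Lemma AL2 tu tw q b : tu <= s -> tw <= s -> s.+1 + tw - tu = b ->
  tu + (q * W + b) - tw = q * W + s.+1.
Proof. lia. Qed.

Lemma self_tx_at u k c b : k < K -> c < N -> b < W ->
  self_tx u ((k * N + c) * W + b) = (b == s.+1) && (c == cidx (cls (part e t k) u)).
Proof.
move=> Hk Hc Hb; rewrite /self_tx divW // modW //.
have -> : (k * N + c) %% N = c by rewrite modnMDl modn_small.
have -> : (k * N + c) %/ N = k by rewrite divnMDl ?N_gt0 // divn_small // addn0.
have -> : k * N + c < K * N.
  apply: (leq_trans (n := k.+1 * N)); first by rewrite mulSn; lia.
  by rewrite leq_mul2r Hk orbT.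
by [].
Qed.

Lemma tx_at u w k c b : k < K -> c < N -> b < W ->
  tx w (t u + ((k * N + c) * W + b))
  = (s.+1 + t w - t u == b) && (c == cidx (cls (part e t k) w)).
Proof.
move=> Hk Hc Hb; rewrite /tx.
have Hu := tle u; have Hw := tle w.
case H: (s.+1 + t w - t u == b).
  have Hb' := eqP H.
  rewrite (AL2 _ Hu Hw Hb') self_tx_at //; last by lia.
  rewrite eqxx /=.
  have -> : t w < t u + ((k * N + c) * W + b) by lia.
  by [].
move: (AL (k * N + c) Hu Hw Hb); rewrite H /self_tx.
by case: (_ < _); case: (_ == _); rewrite ?andbF.
Qed.

Lemma count_formed k u C b :
  count_mem (C, b) (formed e t (part e t k) u) =
  #|[set w | e u w && (~~ part e t k u w || (t w != t u))
             && (cls (part e t k) w == C) && (s.+1 + t w - t u == b)]|.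
Proof.
rewrite /formed count_map count_filter cardsE -count_enumT.
apply: eq_count => w /=; rewrite xpair_eqE.
by case: (e u w); case: (_ || _); case: (_ == C); case: (_ == b).
Qed.

Lemma mem_label P u (x : {set T} * nat * bool) :
  (x \in label e t P u) =
  (x.1 \in formed e t P u) && (x.2 == (count_mem x.1 (formed e t P u) == 1)).
Proof.
case: x => p bt /=; rewrite /label.
apply/mapP/andP => [[p' Hp' [-> ->]] | [Hp /eqP ->]].
  by rewrite mem_undup in Hp'; rewrite Hp' eqxx.
by exists p; rewrite ?mem_undup.
Qed.

Lemma obs_of_inj A B : obs_of A = obs_of B ->
  (#|A| == 0) = (#|B| == 0) /\ (#|A| == 1) = (#|B| == 1).
Proof.
rewrite /obs_of.
case: (#|A| =P 0) => HA; case: (#|B| =P 0) => HB //;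
case: (#|A| =P 1) => HA1; case: (#|B| =P 1) => HB1 //; rewrite ?HA ?HB ?HA1 ?HB1 //; congruence.
Qed.

Lemma Xs_eq k u C b : k < K -> b < W ->
  ~~ ((C == cls (part e t k) u) && (b == s.+1)) ->
  Xs u (t u + ((k * N + cidx C) * W + b)) =
  [set w | e u w && (~~ part e t k u w || (t w != t u))
             && (cls (part e t k) w == C) && (s.+1 + t w - t u == b)].
Proof.
move=> Hk Hb Hns; apply/setP => w; rewrite !inE tx_at ?cidx_lt // cidx_eq.
rewrite [cls _ w == C]eq_sym.
case: (e u w) => //=.
case Hp: (part e t k u w) => /=; last by rewrite andbC.
case Ht: (t w != t u) => /=; first by rewrite andbC.
move/negPn/eqP: Ht => Ht.
rewrite (cls_eq Hp) in Hns *.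
rewrite Ht.
have -> : s.+1 + t u - t u = s.+1 by lia.
by apply/negbTE; move: Hns; rewrite andbC eq_sym.
Qed.

Lemma cnt_big k u C b : W <= b -> count_mem (C, b) (formed e t (part e t k) u) = 0.
Proof.
move=> Hb; rewrite count_formed; apply: eq_card0 => w; rewrite !inE.
have := tle u; have := tle w.
case: (s.+1 + t w - t u =P b) => [H|]; last by rewrite andbF.
lia.
Qed.

Lemma cnt_self k u : count_mem (cls (part e t k) u, s.+1) (formed e t (part e t k) u) = 0.
Proof.
rewrite count_formed; apply: eq_card0 => w; rewrite !inE.
have := tle u; have := tle w.
case: (s.+1 + t w - t u =P s.+1) => [H|]; last by rewrite andbF.
case Hc: (cls (part e t k) w == cls (part e t k) u); last by rewrite andbF.
move: Hc; rewrite eq_sym cls_eqP => ->.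
move=> Hw Hu.
have -> : t w = t u by lia.
by rewrite eqxx andbF.
Qed.

Lemma KL k : k <= K -> forall u v,
  (forall x, x < k * N * W -> E u x = E v x) -> part e t k u v.
Proof.
elim: k => [|k IH] // Hk u v HE.
have Puv : part e t k u v.
  apply: IH; first exact: ltnW.
  move=> x Hx; apply: HE; apply: (leq_trans Hx).
  by rewrite !leq_mul2r leqnSn !orbT.
rewrite partS /refine Puv /=.
set P := part e t k.
have claim : forall p,
    (0 < count_mem p (formed e t P u)) = (0 < count_mem p (formed e t P v)) /\
    (count_mem p (formed e t P u) == 1) = (count_mem p (formed e t P v) == 1).
  case=> C b.
  case: (leqP W b) => Hb.
    by rewrite !cnt_big.
  case Hself: ((C == cls P u) && (b == s.+1)).
    case/andP: Hself => /eqP -> /eqP ->.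
    by rewrite cnt_self (cls_eq Puv) cnt_self.
  have Hself' : ~~ ((C == cls P v) && (b == s.+1)) by rewrite -(cls_eq Puv) Hself.
  have Hself2 : ~~ ((C == cls P u) && (b == s.+1)) by rewrite Hself.
  have Hx : (k * N + cidx C) * W + b < k.+1 * N * W.
    apply: (leq_trans (n := (k * N + cidx C).+1 * W)); first by rewrite mulSn; lia.
    rewrite leq_mul2r; apply/orP; right.
    have := cidx_lt C; rewrite mulSn; lia.
  have := HE _ Hx.
  rewrite /E self_tx_at ?cidx_lt // self_tx_at ?cidx_lt // !cidx_eq.
  have -> : (b == s.+1) && (C == cls P u) = false by rewrite andbC Hself.
  have -> : (b == s.+1) && (C == cls P v) = false by rewrite andbC (negbTE Hself').
  rewrite Xs_eq // Xs_eq //.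
  move/obs_of_inj => [H0 H1].
  by rewrite !count_formed !lt0n H0 H1.
apply/andP; split; apply/allP => x; rewrite !mem_label -!has_pred1 !has_count;
  by case: (claim x.1) => -> ->.
Qed.

Lemma PL u v n : Hpre u n = Hpre v n -> self_tx u n = self_tx v n.
Proof.
move=> H; rewrite /self_tx.
case Hq: (n %/ W < K * N) => //=.
set k := n %/ W %/ N.
have kK : k < K by rewrite /k ltn_divLR ?N_gt0.
have Hkn : k * N * W <= n.
  apply: (leq_trans (n := n %/ W * W)); last exact: leq_divM.
  by rewrite leq_mul2r leq_divM orbT.
have Puv : part e t k u v.
  apply: KL (ltnW kK) _ _ _ => x Hx.
  have Hxn : x < n by apply: leq_trans Hx Hkn.
  by rewrite -(nth_mkseq OSil (E u) Hxn) -(nth_mkseq OSil (E v) Hxn) -/(Hpre u n) H.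
by rewrite (cls_eq Puv).
Qed.

Lemma ex_self v n :
  [exists u, (Hpre v n == Hpre u (size (Hpre v n))) && self_tx u (size (Hpre v n))]
  = self_tx v n.
Proof.
rewrite size_mkseq; apply/existsP/idP => [[u /andP[/eqP H Hs]]|Hs].
  by rewrite -(PL (esym H)).
by exists v; rewrite eqxx Hs.
Qed.

Definition state (v : T) (r : nat) : nstate :=
  if r < t v then Asleep
  else if r - t v < Tend then Awake (Hpre v (r - t v).+1) else Done (Hpre v Tend).
Definition pst (r : nat) : T -> nstate :=
  if r is r'.+1 then (fun w => state w r') else (fun _ => Asleep).

Lemma self_tx_end w x : Tend <= x -> self_tx w x = false.
Proof.
move=> H; rewrite /self_tx.
have -> : x %/ W < K * N = false by rewrite ltn_divLR // -/Tend ltnNge H.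
by [].
Qed.

Lemma tmsg_pst r w : tmsg Alg (pst r w) = if tx w r then Some 0 else None.
Proof.
case: r => [|r] /=; first by [].
rewrite /state /tx.
case: ltnP => H1 /=.
  by have -> : t w < r.+1 = false by lia.
have -> : t w < r.+1 by lia.
rewrite /=.
have -> : r.+1 - t w = (r - t w).+1 by lia.
case H2: (r - t w < Tend) => /=.
  rewrite /Alg ex_self size_mkseq.
  case: leqP => H3.
    by rewrite self_tx_end.
  by case: (self_tx w _).
by rewrite self_tx_end //; move: H2; rewrite ltnNge => /negbFE H2; apply: leq_trans H2 _.
Qed.

Lemma heard_pst r v : heard e Alg (pst r) v = obs_of (Xs v r).
Proof.
have HT : transmitters e Alg (pst r) v = Xs v r.
  by apply/setP => w; rewrite !inE tmsg_pst; case: (tx w r).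
rewrite /heard HT /obs_of.
case: eqP => // _; case: eqP => // H1.
case: pickP => [w Hw | H0].
  rewrite tmsg_pst.
  have -> : tx w r by move: Hw; rewrite inE => /andP[].
  by [].
by move: H1; rewrite eq_card0.
Qed.

Lemma tx_small w g : g <= s -> tx w g = false.
Proof.
move=> Hg; rewrite /tx /self_tx.
rewrite modn_small; last by lia.
have -> : (g - t w == s.+1) = false by apply/negbTE; lia.
by rewrite !andbF.
Qed.

Lemma Xs_small v g : g <= s -> Xs v g = set0.
Proof. by move=> Hg; apply/setP => w; rewrite !inE tx_small // andbF. Qed.

Lemma E0 v : E v 0 = OSil.
Proof.
rewrite /E /self_tx mod0n /= andbF /= Xs_small ?addn0 ?tle //.
by rewrite /obs_of cards0.
Qed.

Lemma Tend_gt0 : 0 < K -> 0 < Tend.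
Proof. by move=> HK; rewrite /Tend !muln_gt0 HK N_gt0. Qed.

Lemma pst_val r v : pst r v = (if r is r'.+1 then state v r' else Asleep).
Proof. by case: r. Qed.

Lemma step_ok r v : 0 < K -> step e t Alg r (pst r) v = state v r.
Proof.
move=> HK; have HT := Tend_gt0 HK.
rewrite /step pst_val heard_pst.
case: r => [|r].
  rewrite Xs_small // /obs_of cards0 /state.
  rewrite /=; case: eqP => [<-|H] /=.
    by rewrite subnn HT /Hpre /mkseq /= E0.
  by have -> : 0 < t v by lia.
rewrite {1}/state.
case: ltnP => H1.
  rewrite Xs_small; last by have := tle v; lia.
  rewrite /obs_of cards0 /state /=.
  case: eqP => [<-|H] /=.
    by rewrite ltnn subnn HT /Hpre /mkseq /= E0.
  by have -> : r.+1 < t v by lia.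
case: ltnP => H2.
  rewrite /Alg ex_self size_mkseq /state.
  have -> : r.+1 < t v = false by lia.
  have -> : r.+1 - t v = (r - t v).+1 by lia.
  case: leqP => H3.
    by have -> : (r - t v).+1 = Tend by lia.
  rewrite /Hpre [mkseq _ (r - t v).+2]mkseqS.
  case Hs: (self_tx v (r - t v).+1).
    by rewrite /E Hs.
  rewrite /E Hs.
  by have -> : t v + (r - t v).+1 = r.+1 by lia.
rewrite /state.
have -> : r.+1 < t v = false by lia.
by have -> : r.+1 - t v < Tend = false by lia.
Qed.

Lemma sim r : 0 < K -> exec e t Alg r = state^~ r.
Proof.
move=> HK; elim: r => [|r IH].
  apply: functional_extensionality => v.
  by rewrite -(step_ok 0 v HK).
apply: functional_extensionality => v.
rewrite -(step_ok r.+1 v HK) /=.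
by rewrite IH.
Qed.
End Sim.

Theorem lemma8 (T : finType) (e : rel T) (t : T -> nat) :
  is_config e t -> classifier_yes e t -> feasible e t.
Proof.
move=> _ [i [/andP[Hi _] /existsP[w Hw] _]].
have HK : 0 < i by [].
exists (Alg e t i), (fun h => h == Hpre e t i w (Tend t i)), (span t + Tend t i).
have Hst : forall v, exec e t (Alg e t i) (span t + Tend t i) v = Done (Hpre e t i v (Tend t i)).
  move=> v; rewrite (sim e t _ HK) /state.
  have := tle t v => Hv.
  have -> : span t + Tend t i < t v = false by lia.
  by have -> : span t + Tend t i - t v < Tend t i = false by lia.
split; first by move=> v; rewrite Hst.
have -> : [set v | final_hist (exec e t (Alg e t i) (span t + Tend t i) v) == Hpre e t i w (Tend t i)] = [set w].
  apply/setP => v; rewrite !inE Hst /=.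
  apply/eqP/eqP => [H|->] //.
  have Pvw : part e t i v w.
    apply: (KL (leqnn i)) => x Hx.
    by rewrite -(nth_mkseq OSil (E e t i v) Hx) -(nth_mkseq OSil (E e t i w) Hx) -/(Hpre e t i v _) -/(Hpre e t i w _) /Tend H.
  case/cards1P: Hw => x Hx.
  have : w \in cls (part e t i) w by rewrite inE part_refl.
  have : v \in cls (part e t i) w by rewrite inE part_sym.
  by rewrite Hx !inE => /eqP -> /eqP ->.
by rewrite cards1.
Qed.
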